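(* Let $\mathcal{C}$ be a PL-cograph and $P,Q,R$ distinct points with $e=\mathcal{C}(P,Q)\neq f=\mathcal{C}(P,R)$. Then $P$ is the unique point incident to both an edge of value $e$ and an edge of value $f$: if $P',Q',R'$ are points with $\mathcal{C}(P',Q')=e$ and $\mathcal{C}(P',R')=f$, then $P'=P$.
   Context: A cograph is a function $\mathcal{C}$ assigning to each unordered pair $\{P,Q\}$ of distinct elements of a point set a value $\mathcal{C}(P,Q)$ (an edge). A PL-cograph is a cograph satisfying: (1) for distinct points $P,Q,R$, if $\mathcal{C}(P,Q)=\mathcal{C}(Q,R)$ then $\mathcal{C}(P,Q)=\mathcal{C}(P,R)$; (2) for distinct points $P,Q,R,S$, if $\mathcal{C}(P,Q)=\mathcal{C}(R,S)$ then $\mathcal{C}(P,Q)=\mathcal{C}(P,R)=\mathcal{C}(P,S)=\mathcal{C}(Q,R)=\mathcal{C}(Q,S)$. *)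

(* Defs.v *)
(* A cograph on a point type T with edge values in V: a function on pairs of
   points, symmetric (so it is a function on unordered pairs); its values on
   the diagonal (P,P) are irrelevant and never used. *)
Definition cograph {T V : Type} (C : T -> T -> V) : Prop :=
  forall P Q : T, P <> Q -> C P Q = C Q P.

Definition PL_cograph {T V : Type} (C : T -> T -> V) : Prop :=
  cograph C /\
  (forall P Q R : T, P <> Q -> P <> R -> Q <> R ->
     C P Q = C Q R -> C P Q = C P R) /\
  (forall P Q R S : T, P <> Q -> P <> R -> P <> S -> Q <> R -> Q <> S -> R <> S ->
     C P Q = C R S ->
     C P Q = C P R /\ C P Q = C P S /\ C P Q = C Q R /\ C P Q = C Q S).

(* Main.v *)
Require Import Defs.
From Stdlib Require Import Classical.

Lemma keyL (T V : Type) (C : T -> T -> V) : PL_cograph C ->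
  forall A B A' B', A <> B -> A' <> B' -> C A B = C A' B' -> A <> A' ->
  C A A' = C A B.
Proof.
  intros [Hs [H1 H2]] A B A' B' hAB hAB' He hAA.
  destruct (classic (A' = B)) as [E|nE]; [subst; reflexivity|].
  destruct (classic (B' = A)) as [E|nE2].
  { subst. rewrite He. apply Hs. congruence. }
  destruct (classic (B' = B)) as [E|nE3].
  { subst. symmetry. apply H1; try congruence.
    rewrite He. apply Hs. congruence. }
  symmetry. apply (H2 A B A' B'); congruence.
Qed.

Theorem mainTheorem20 (T V : Type) (C : T -> T -> V) (P Q R : T) :
  PL_cograph C ->
  P <> Q -> P <> R -> Q <> R ->
  C P Q <> C P R ->
  forall P' Q' R' : T, P' <> Q' -> P' <> R' ->
    C P' Q' = C P Q -> C P' R' = C P R -> P' = P.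
Proof.
  intros H hPQ hPR hQR hne P' Q' R' h1 h2 e1 e2.
  destruct (classic (P' = P)) as [E|nE]; [exact E|].
  exfalso. apply hne.
  rewrite <- e1, <- e2.
  rewrite <- (keyL _ _ _ H P' Q' P Q); auto.
  rewrite <- (keyL _ _ _ H P' R' P R); auto.
Qed.
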